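(* In the setting below, $V=\ker\bar{\phi}$ as subspaces of $D(\mathcal{A})/D(\mathcal{A}')$.
   Context: A complex subspace arrangement in $\mathbb{C}^l$ is a finite set of complex linear subspaces of $\mathbb{C}^l$ with no two distinct members $x\subset y$. For a finite set $\mathcal{C}$ of linear subspaces of a complex vector space $W$ with a linear order, $D(\mathcal{C})$ is the cochain complex over $\mathbb{Q}$ with basis all subsets $\sigma\subseteq\mathcal{C}$, where with $\vee\sigma=\bigcap_{x\in\sigma}x$ ($\vee\emptyset=W$), $\deg\sigma=2\operatorname{codim}_W(\vee\sigma)-|\sigma|$ and for $\sigma=\{x_{i_1},\dots,x_{i_r}\}$ in increasing order, $d\sigma=\sum_{j:\vee(\sigma\setminus\{x_{i_j}\})=\vee\sigma}(-1)^j(\sigma\setminus\{x_{i_j}\})$. Setting: $\mathcal{A}=\{x_0,\dots,x_n\}$ is a complex subspace arrangement in $\mathbb{C}^l$, $\mathcal{A}'=\mathcal{A}\setminus\{x_0\}$; on $\mathcal{A}'$, $y\sim z$ iff $x_0\cap y=x_0\cap z$, with classes $\mathcal{A}_1,\dots,\mathcal{A}_r$; the linear order is $x_0<x_1<\dots<x_n$ with elements of $\mathcal{A}_i$ preceding elements of $\mathcal{A}_j$ whenever $i<j$. $D(\mathcal{A}')$ is the subcomplex of $D(\mathcal{A})$ spanned by subsets not containing $x_0$. $\widetilde{\mathcal{A}''}=\{x_0\cap y\mid y\in\mathcal{A}'\}$, ordered by the order of the corresponding classes, and $D(\widetilde{\mathcal{A}''})$ is formed with ambient space $x_0$. $E=\{(y,z)\in\mathcal{A}'\times\mathcal{A}'\mid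 y\sim z,\ y\ne z\}$. The linear map $\phi\colon D(\mathcal{A})\to D(\widetilde{\mathcal{A}''})$ is: $\phi(\sigma)=0$ if $x_0\notin\sigma$ or if $x_0\in\sigma$ and $\{y,z\}\subseteq\sigma$ for some $(y,z)\in E$; otherwise, for $\sigma=\{x_0,x_{i_1},\dots,x_{i_r}\}$, $\phi(\sigma)=(-1)^r\{x_0\cap x_{i_1},\dots,x_0\cap x_{i_r}\}$. Since $\phi$ vanishes on $D(\mathcal{A}')$ it induces $\bar\phi\colon D(\mathcal{A})/D(\mathcal{A}')\to D(\widetilde{\mathcal{A}''})$. For $(u,v)\in E$, $I_{u,v}$ is the subspace of $D(\mathcal{A})/D(\mathcal{A}')$ spanned by the classes of all $\{x_0,u\}\cup Y-\{x_0,v\}\cup Y$ and all $\{x_0,u,v\}\cup Y$, for $Y\subseteq\mathcal{A}\setminus\{x_0,u,v\}$. Finally $V=\sum_{(u,v)\in E}I_{u,v}$ (with $V=0$ if $E=\emptyset$). *)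

(* Defs.v *)
From HB Require Import structures.
From mathcomp Require Import all_boot all_order all_algebra.
From mathcomp Require Import complex reals.
Set Implicit Arguments. Unset Strict Implicit. Unset Printing Implicit Defensive.
Import Order.TTheory GRing.Theory Num.Theory.
Local Open Scope ring_scope.

Definition freeQ (T : finType) := 'rV[rat]_#|{: T}|.
Definition bvec (T : finType) (t : T) : freeQ T := delta_mx 0 (enum_rank t).

Section Arrangement.
Variables (R : realType) (l n : nat).
Notation C := (complex R).
(* The subspaces x_0, ..., x_n of C^l, x_i = row space of A i. *)
Variable A : 'I_n.+1 -> 'M[C]_l.

Definition x0 : 'I_n.+1 := ord0.

Definition is_subspace_arrangement :=
  forall i j : 'I_n.+1, i != j -> ~~ (A i <= A j)%MS.

Definition simA (y z : 'I_n.+1) : bool :=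
  (A x0 :&: A y == A x0 :&: A z)%MS.

(* The linear order x_0 < x_1 < ... < x_n has elements of A_i preceding those
   of A_j for i < j, for a suitable numbering of the classes: equivalently,
   every ~-class of A' is a set of consecutive indices. *)
Definition classes_consecutive :=
  forall i j k : 'I_n.+1, (x0 < i)%N -> (i < j)%N -> (j < k)%N -> simA i k -> simA i j.

Definition inE (y z : 'I_n.+1) : bool :=
  [&& y != x0, z != x0, simA y z & y != z].

(* ~-class of y in A' ; the element x0 ∩ y of Ã'' is identified with the
   class of y (x0 ∩ y = x0 ∩ z iff y ~ z). *)
Definition clsA (y : 'I_n.+1) : {set 'I_n.+1} :=
  [set z | (z != x0) && simA y z].

Definition Atil : {set {set 'I_n.+1}} := [set clsA y | y in [set~ x0]].

Definition DA := freeQ {set 'I_n.+1}.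

(* Basis of D(A)/D(A'): classes of the subsets containing x0 (the classes of
   subsets not containing x0 are zero). *)
Local Notation Qidx := {s : {set 'I_n.+1} | x0 \in s}.
Definition DQ := freeQ Qidx.

Definition qcls (sigma : {set 'I_n.+1}) : DQ :=
  if (insub sigma : option Qidx) is Some s
  then bvec s else 0.

Local Notation Tidx := {S : {set {set 'I_n.+1}} | S \subset Atil}.
Definition DT := freeQ Tidx.

Definition tbvec (S : {set {set 'I_n.+1}}) : DT :=
  if (insub S : option Tidx) is Some s
  then bvec s else 0.

Definition phi (sigma : {set 'I_n.+1}) : DT :=
  if (x0 \in sigma) &&
     ~~ [exists y, exists z, [&& inE y z, y \in sigma & z \in sigma]]
  then (-1) ^+ (#|sigma| - 1) *: tbvec [set clsA y | y in sigma :\ x0]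
  else 0.

Definition phibar_mx : 'M[rat]_(#|{: Qidx}|, #|{: Tidx}|) :=
  \matrix_(i < #|{: Qidx}|) phi (val (enum_val i)).

Definition I_uv (u v : 'I_n.+1) : 'M[rat]_#|{: Qidx}| :=
  (\sum_(Y : {set 'I_n.+1} | Y \subset ~: [set x0; u; v])
     (<<qcls (x0 |: (u |: Y)) - qcls (x0 |: (v |: Y))>>
      + <<qcls (x0 |: (u |: (v |: Y)))>>))%MS.

Definition Vsp : 'M[rat]_#|{: Qidx}| :=
  (\sum_(p : 'I_n.+1 * 'I_n.+1 | inE p.1 p.2) I_uv p.1 p.2)%MS.

End Arrangement.

(* Main.v *)
Require Import Defs.
From HB Require Import structures.
From mathcomp Require Import all_boot all_order all_algebra.
From mathcomp Require Import complex reals.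
Set Implicit Arguments. Unset Strict Implicit. Unset Printing Implicit Defensive.
Import Order.TTheory GRing.Theory Num.Theory.
Local Open Scope ring_scope.

Section Proof.
Variables (R : realType) (l n : nat) (A : 'I_n.+1 -> 'M[complex R]_l).
Local Notation X0 := (x0 n).
Local Notation sim := (simA A).
Local Notation cls := (clsA A).
Implicit Types (S : {set {set 'I_n.+1}}) (s t Y a b : {set 'I_n.+1}) (y z u v : 'I_n.+1).

Lemma sim_refl y : sim y y.
Proof. by rewrite /simA submx_refl. Qed.
Lemma sim_sym y z : sim y z -> sim z y.
Proof. by rewrite /simA => /andP[a b]; apply/andP. Qed.
Lemma sim_trans y z w : sim y z -> sim z w -> sim y w.
Proof.
rewrite /simA => /andP[a b] /andP[c d]; apply/andP; split; [exact: submx_trans a c | exact: submx_trans d b].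
Qed.

Lemma cls_sim y z : sim y z -> cls y = cls z.
Proof.
move=> h; apply/setP=> w; rewrite !inE; congr (_ && _); apply/idP/idP => h2.
  exact: sim_trans (sim_sym h) h2.
exact: sim_trans h h2.
Qed.

Lemma cls_eq y z : z != X0 -> (cls y == cls z) = sim y z.
Proof.
move=> hz; apply/eqP/idP => [e|]; last exact: cls_sim.
have : z \in cls z by rewrite inE hz sim_refl.
by rewrite -e inE => /andP[].
Qed.

Definition hasrep (s : {set 'I_n.+1}) :=
  [exists y, exists z, [&& Defs.inE A y z, y \in s & z \in s]].
Definition cset (s : {set 'I_n.+1}) := [set cls y | y in s :\ X0].

Lemma norepE s : ~~ hasrep s = (#|cset s| == #|s :\ X0|).
Proof.
apply/idP/imset_injP => [h | h].
  move=> y z; rewrite !inE => /andP[hy ys] /andP[hz zs] /eqP.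
  rewrite cls_eq // => hs; case: (eqVneq y z) => // hne.
  move/negP: h; case; apply/existsP; exists y; apply/existsP; exists z.
  by rewrite /Defs.inE hy hz hs hne ys zs.
apply/negP => /existsP[y /existsP[z /and3P[/and4P[hy hz hs hne] ys zs]]].
have e : y = z by apply: h; rewrite ?inE ?hy ?hz ?ys ?zs //; apply/eqP; rewrite cls_eq.
by rewrite e eqxx in hne.
Qed.


Local Notation Q := {s : {set 'I_n.+1} | X0 \in s}.
Local Notation T := {S : {set {set 'I_n.+1}} | S \subset Atil A}.

Lemma qcls0 s : X0 \notin s -> qcls s = 0.
Proof. by move=> h; rewrite /qcls insubN. Qed.

Lemma qcls_val (i : 'I_#|{: Q}|) : qcls (val (enum_val i)) = delta_mx 0 i.
Proof. by rewrite /qcls valK /bvec enum_valK. Qed.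

Lemma qclsM s : X0 \in s -> qcls s *m phibar_mx A = phi A s.
Proof. by move=> h; rewrite /qcls insubT /bvec -rowE rowK enum_rankK. Qed.

Definition rep (c : {set 'I_n.+1}) := odflt X0 [pick y in c].
Definition canon (S : {set {set 'I_n.+1}}) := X0 |: [set rep c | c in S].
Definition Nmx : 'M[rat]_(#|{: T}|, #|{: Q}|) :=
  \matrix_(j < #|{: T}|) ((-1) ^+ #|val (enum_val j)| *: qcls (canon (val (enum_val j)))).

Lemma tbvecM S : S \subset Atil A -> tbvec A S *m Nmx = (-1) ^+ #|S| *: qcls (canon S).
Proof. by move=> h; rewrite /tbvec insubT /bvec -rowE rowK enum_rankK. Qed.

Lemma cset_sub s : cset s \subset Atil A.
Proof.
apply/subsetP => c /imsetP[y]; rewrite !inE => /andP[hy _] ->.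
by apply/imsetP; exists y; rewrite ?inE.
Qed.

Lemma rep_cls y : y != X0 -> sim y (rep (cls y)) /\ rep (cls y) != X0.
Proof.
move=> hy; rewrite /rep; case: pickP => [z|] /=.
  by rewrite inE => /andP[-> ->].
by move/(_ y); rewrite inE hy sim_refl.
Qed.

Lemma cls_rep y : y != X0 -> cls (rep (cls y)) = cls y.
Proof. by move=> hy; case: (rep_cls hy) => h _; exact: esym (cls_sim h). Qed.

Lemma repD s : [set rep c | c in cset s] = canon (cset s) :\ X0.
Proof.
rewrite /canon setU1K //; apply/imsetP => -[c /imsetP[y]].
rewrite !inE => /andP[hy _] -> e.
by case: (rep_cls hy); rewrite -e eqxx.
Qed.

Lemma cset_canon s : cset (canon (cset s)) = cset s.
Proof.
rewrite /cset -repD -imset_comp -[RHS]imset_id; apply: eq_in_imset => c.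
by case/imsetP => y; rewrite !inE => /andP[hy _] -> /=; rewrite cls_rep.
Qed.

Lemma card_repD s : #|canon (cset s) :\ X0| = #|cset s|.
Proof.
rewrite -repD card_in_imset // => c d /imsetP[y]; rewrite !inE => /andP[hy _] ->.
case/imsetP => z; rewrite !inE => /andP[hz _] -> e.
by rewrite -(cls_rep hy) -(cls_rep hz) e.
Qed.

Lemma canon_norep s : ~~ hasrep (canon (cset s)).
Proof. by rewrite norepE cset_canon card_repD. Qed.

Lemma canon0 S : X0 \in canon S.
Proof. by rewrite setU11. Qed.


Lemma Iuv_sub u v Y : Defs.inE A u v -> Y \subset ~: [set X0; u; v] ->
  (qcls (X0 |: (u |: Y)) - qcls (X0 |: (v |: Y)) <= Vsp A)%MS /\
  (qcls (X0 |: (u |: (v |: Y))) <= Vsp A)%MS.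
Proof.
move=> huv hY.
have hI : (I_uv u v <= Vsp A)%MS.
  exact: (sumsmx_sup (u, v) (P := fun p => Defs.inE A p.1 p.2)) huv (submx_refl _).
split; apply: submx_trans hI; apply: submx_trans (sumsmx_sup Y hY (submx_refl _)).
  by apply: submx_trans (addsmxSl _ _); rewrite genmxE.
by apply: submx_trans (addsmxSr _ _); rewrite genmxE.
Qed.

Lemma phi_eq a b : (X0 \in a) = (X0 \in b) -> hasrep a = hasrep b ->
  #|a| = #|b| -> cset a = cset b -> phi A a = phi A b.
Proof.
move=> h1 h2 h3 h4; rewrite /phi -/(hasrep a) -/(hasrep b) -/(cset a) -/(cset b).
by rewrite h1 h2 h3 h4.
Qed.

Lemma phi_rep a : hasrep a -> phi A a = 0.
Proof. by move=> h; rewrite /phi -/(hasrep a) h andbF. Qed.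


Lemma swapV k : forall s t, #|s :\: t| = k -> X0 \in s -> X0 \in t ->
  ~~ hasrep s -> ~~ hasrep t -> cset s = cset t -> (qcls s - qcls t <= Vsp A)%MS.
Proof.
elim: k => [|k IH] s t hk s0 t0 ns nt est.
  have st : s \subset t by rewrite -setD_eq0 -cards_eq0 hk.
  have e : s :\ X0 = t :\ X0.
    apply/eqP; rewrite eqEcard setSD //=.
    move: ns nt; rewrite !norepE => /eqP <- /eqP <-; by rewrite est.
  by rewrite -(setD1K s0) -(setD1K t0) e subrr sub0mx.
have /set0Pn[u hu] : s :\: t != set0 by rewrite -card_gt0 hk.
move: hu; rewrite inE => /andP[ut us].
have hu0 : u != X0 by apply: contraNneq ut => ->.
have : cls u \in cset t by rewrite -est; apply/imsetP; exists u; rewrite ?inE ?hu0.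
case/imsetP => v; rewrite !inE => /andP[hv0 vt] euv.
have suv : sim u v by rewrite -cls_eq // euv.
have uv : u != v by apply: contraNneq ut => ->.
have huv : Defs.inE A u v by rewrite /Defs.inE hu0 hv0 suv uv.
have vs : v \notin s.
  apply/negP => vs; move/negP: ns; apply; apply/existsP; exists u; apply/existsP; exists v.
  by rewrite huv us vs.
set Y := s :\ X0 :\ u.
have hsD : s :\ X0 = u |: Y by rewrite /Y setD1K // !inE hu0.
have es : s = X0 |: (u |: Y) by rewrite -hsD setD1K.
have vY : v \notin Y by rewrite !inE (negbTE vs) !andbF.
have uY : u \notin Y by rewrite !inE eqxx.
have x0Y : X0 \notin Y by rewrite !inE eqxx andbF.
have hY : Y \subset ~: [set X0; u; v].
  apply/subsetP => x hx; rewrite !inE.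
  case: (eqVneq x X0) => [ex|_]; first by rewrite ex (negbTE x0Y) in hx.
  case: (eqVneq x u) => [ex|_]; first by rewrite ex (negbTE uY) in hx.
  case: (eqVneq x v) => [ex|_] //; by rewrite ex (negbTE vY) in hx.
set s' := X0 |: (v |: Y).
have hs'D : s' :\ X0 = v |: Y by rewrite /s' setU1K // in_setU1 negb_or eq_sym hv0 x0Y.
have ecs : cset s' = cset s by rewrite /cset hs'D hsD !imsetU1 euv.
have -> : qcls s - qcls t = (qcls s - qcls s') + (qcls s' - qcls t) by rewrite addrA subrK.
apply: addmx_sub; first by rewrite es; case: (Iuv_sub huv hY).
apply: IH => //; last by rewrite ecs.
- have e : s' :\: t = (s :\: t) :\ u.
    apply/setP => x; rewrite !inE.
    case: (eqVneq x X0) => [->|hx0]; first by rewrite t0 !andbF.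
    case: (eqVneq x v) => [->|hxv]; first by rewrite vt !andbF.
    by case: (eqVneq x u) => [->|hxu] /=; rewrite ?andbF ?andbT.
  by move: hk; rewrite (cardsD1 u (s :\: t)) e !inE ut us => -[].
- by rewrite setU11.
- rewrite norepE ecs hs'D; move: ns; rewrite norepE hsD !cardsU1 vY uY.
  by [].
Qed.


Lemma row_in_V s : X0 \in s -> (qcls s - phi A s *m Nmx <= Vsp A)%MS.
Proof.
move=> s0; case hr: (hasrep s).
  rewrite phi_rep // mul0mx subr0.
  case/existsP: hr => y /existsP[z /and3P[hyz ys zs]].
  move: (hyz); rewrite /Defs.inE => /and4P[hy0 hz0 _ hne].
  set Y := s :\ X0 :\ y :\ z.
  have es : s = X0 |: (y |: (z |: Y)).
    by rewrite /Y setD1K ?setD1K ?setD1K // !inE ?hy0 ?hz0 ?ys ?zs // eq_sym hne.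
  have hY : Y \subset ~: [set X0; y; z].
    by apply/subsetP => x; rewrite !inE => /and4P[hz hy h0 _]; rewrite (negbTE hz) (negbTE hy) (negbTE h0).
  by rewrite es; case: (Iuv_sub hyz hY).
rewrite /phi -/(hasrep s) -/(cset s) hr s0 /= -scalemxAl tbvecM ?cset_sub // scalerA.
have -> : #|cset s| = (#|s| - 1)%N.
  by move/negbT: hr; rewrite norepE (cardsD1 X0 s) s0 => /eqP ->; rewrite add1n subn1.
rewrite -exprMn mulrNN mulr1 expr1n scale1r.
apply: (swapV erefl) => //; first exact: canon0.
- by rewrite hr.
- exact: canon_norep.
- by rewrite cset_canon.
Qed.

End Proof.

Theorem lemma3p2 (R : realType) (l n : nat) (A : 'I_n.+1 -> 'M[complex R]_l) :
  is_subspace_arrangement A ->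
  classes_consecutive A ->
  (Vsp A == kermx (phibar_mx A))%MS.
Proof.
move=> _ _; apply/andP; split.
  apply/sumsmx_subP => -[u v] /= huv; apply/sumsmx_subP => Y hY.
  have hu0 : u != x0 n by case/and4P: huv.
  have hv0 : v != x0 n by case/and4P: huv.
  have hne : u != v by case/and4P: huv.
  have suv : simA A u v by case/and4P: huv.
  have x0Y : x0 n \notin Y by move/subsetP: hY => /(_ (x0 n)); rewrite !inE eqxx /= => h; apply/negP => /h.
  have uY : u \notin Y by move/subsetP: hY => /(_ u); rewrite !inE eqxx orbT /= => h; apply/negP => /h.
  have vY : v \notin Y by move/subsetP: hY => /(_ v); rewrite !inE eqxx !orbT /= => h; apply/negP => /h.
  rewrite addsmx_sub !genmxE !sub_kermx mulmxBl !qclsM ?setU11 //.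
  have hDu : (x0 n |: (u |: Y)) :\ x0 n = u |: Y by rewrite setU1K // in_setU1 negb_or eq_sym hu0.
  have hDv : (x0 n |: (v |: Y)) :\ x0 n = v |: Y by rewrite setU1K // in_setU1 negb_or eq_sym hv0.
  have ec : cset A (x0 n |: (u |: Y)) = cset A (x0 n |: (v |: Y)).
    by rewrite /cset hDu hDv !imsetU1 (cls_sim suv).
  have ecard : #|(x0 n |: (u |: Y)) :\ x0 n| = #|(x0 n |: (v |: Y)) :\ x0 n|.
    by rewrite hDu hDv !cardsU1 uY vY.
  rewrite (@phi_eq _ _ _ A (x0 n |: (u |: Y)) (x0 n |: (v |: Y))) ?setU11 ?subrr ?eqxx //=.
  - rewrite (@phi_rep _ _ _ A) ?eqxx //; apply/existsP; exists u; apply/existsP; exists v.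
    by rewrite huv !in_setU1 !eqxx !orbT.
  - have := norepE A (x0 n |: (u |: Y)); have := norepE A (x0 n |: (v |: Y)).
    by rewrite ec ecard => <- /negb_inj.
  - by rewrite (cardsD1 (x0 n)) ecard [RHS](cardsD1 (x0 n)) !setU11.
have H1 : (1%:M - phibar_mx A *m Nmx A <= Vsp A)%MS.
  apply/row_subP => i.
  rewrite rowE mulmxBr mulmx1 mulmxA -qcls_val (@qclsM _ _ _ A _ (valP (enum_val i))).
  exact: (@row_in_V _ _ _ A _ (valP (enum_val i))).
apply/row_subP => i; set w := row i _.
have hw : w *m phibar_mx A = 0 by rewrite /w -row_mul mulmx_ker row0.
have -> : w = w *m (1%:M - phibar_mx A *m Nmx A) by rewrite mulmxBr mulmx1 mulmxA hw mul0mx subr0.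
exact: submx_trans (submxMl _ _) H1.
Qed.
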